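(* Let the distinct values $v_{j,k}$ ($1\le j\le s$, $1\le k\le m_j$) be partitioned into classes $[v_{j,1},\dots,v_{j,m_j}]$, and let $X_1,\dots,X_n$ be finite domain variables. Introduce variables $Y_1,\dots,Y_{n+1}$ whose values are $s$-tuples of integers (with $Y_i[j]\in\{0,\dots,m_j\}$), with $Y_1=(0,\dots,0)$, and for each $1\le i\le n$ the ternary constraint $E(X_i,Y_i,Y_{i+1})$ which holds iff for every $1\le j\le s$: $X_i\neq v_{j,k}$ for all $k>Y_i[j]+1$, and $Y_{i+1}[j]=Y_i[j]+1$ if $X_i=v_{j,Y_i[j]+1}$, and $Y_{i+1}[j]=Y_i[j]$ otherwise. Then (a) an assignment to $X_1,\dots,X_n$ satisfies $\mathrm{Precedence}([[v_{1,1},\dots,v_{1,m_1}],\dots,[v_{s,1},\dots,v_{s,m_s}]],[X_1,\dots,X_n])$ iff it extends to an assignment of the $Y_i$ with $Y_1=(0,\dots,0)$ satisfying all $E(X_i,Y_i,Y_{i+1})$; and (b) if $D(Y_1)=\{(0,\dots,0)\}$ and each $E(X_i,Y_i,Y_{i+1})$ is GAC (with all domains nonempty), then this Precedence constraint is GAC on the domains of $X_1,\dots,X_n$.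
   Context: A support of a constraint is an assignment of a value from its domain to each of its variables that satisfies it; a constraint is GAC iff every value in every variable's domain belongs to some support. For distinct values $a,b$, $\mathrm{Precedence}([a,b],[X_1,\dots,X_n])$ holds iff $\min\{i \mid X_i=a \text{ or } i=n+1\} < \min\{i \mid X_i=b \text{ or } i=n+2\}$. $\mathrm{Precedence}([[v_{1,1},\dots,v_{1,m_1}],\dots,[v_{s,1},\dots,v_{s,m_s}]],[X_1,\dots,X_n])$ holds iff $\mathrm{Precedence}([v_{j,k},v_{j,k+1}],[X_1,\dots,X_n])$ holds for all $1\le j\le s$, $1\le k<m_j$. *)

(* Defs.v *)
(* All indices below are 0-based: the paper's X_i (1<=i<=n)
   is the i-1'th entry of a sequence X, the paper's v_{j,k} is the (k-1)'th
   entry of the (j-1)'th class, and the paper's Y_i is Ys (i-1). *)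
From mathcomp Require Import all_boot.
Set Implicit Arguments. Unset Strict Implicit. Unset Printing Implicit Defensive.

Section Defs.
Variable V : eqType.

(* min { i (1-based) | X_i = a  or  i = dflt }, for dflt > size X *)
Definition firstpos (a : V) (X : seq V) (dflt : nat) : nat :=
  if a \in X then (index a X).+1 else dflt.

Definition Precedence2 (a b : V) (X : seq V) : Prop :=
  firstpos a X (size X).+1 < firstpos b X (size X).+2.

Definition vjk (cls : seq (seq V)) (j k : nat) : option V :=
  onth (nth [::] cls j) k.

Definition Precedence (cls : seq (seq V)) (X : seq V) : Prop :=
  forall j k a b, vjk cls j k = Some a -> vjk cls j k.+1 = Some b ->
    Precedence2 a b X.

Definition Yvalid (cls : seq (seq V)) (y : seq nat) : Prop :=
  size y = size cls /\
  forall j, j < size cls -> nth 0 y j <= size (nth [::] cls j).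

Definition Econ (cls : seq (seq V)) (x : V) (y y' : seq nat) : Prop :=
  forall j, j < size cls ->
    (forall k, (nth 0 y j).+1 <= k -> vjk cls j k <> Some x) /\
    nth 0 y' j = (if vjk cls j (nth 0 y j) == Some x
                  then (nth 0 y j).+1 else nth 0 y j).

Definition GAC_E (cls : seq (seq V)) (DX : seq V) (DY DY' : seq (seq nat)) : Prop :=
  (forall x, x \in DX -> exists y y', [/\ y \in DY, y' \in DY' & Econ cls x y y']) /\
  (forall y, y \in DY -> exists x y', [/\ x \in DX, y' \in DY' & Econ cls x y y']) /\
  (forall y', y' \in DY' -> exists x y, [/\ x \in DX, y \in DY & Econ cls x y y']).

Definition GAC_Prec (cls : seq (seq V)) (n : nat) (DX : nat -> seq V) : Prop :=
  forall i a, i < n -> a \in DX i ->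
    exists X : seq V,
      [/\ size X = n,
          (forall k x, onth X k = Some x -> x \in DX k),
          onth X i = Some a &
          Precedence cls X].

End Defs.

(* Main.v *)
Require Import Defs.
From mathcomp Require Import all_boot.
Set Implicit Arguments. Unset Strict Implicit. Unset Printing Implicit Defensive.

Lemma onth_nthP (T : Type) (x0 : T) s k a :
  onth s k = Some a <-> k < size s /\ nth x0 s k = a.
Proof.
elim: s k => [|x s IH] [|k] //=; try by split => [//|[]].
- by split => [[->]|[_ ->]].

Qed.

Section S.
Variable V : eqType.

Lemma P2E (a b : V) X : Precedence2 a b X <-> (b \in X -> index a X < index b X).
Proof.
rewrite /Precedence2 /firstpos.
have ha := index_size a X; have hb := index_size b X.
case: (boolP (a \in X)) => Ha; case: (boolP (b \in X)) => Hb.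
- by rewrite ltnS; split => // /(_ isT).
- split => // _; rewrite -index_mem in Ha; by rewrite ltnS ltnW // ltnW.
- rewrite -index_mem in Hb; rewrite (memNindex Ha); split => [|/(_ isT)].
    by rewrite ltnS => H; have := ltn_trans H Hb; rewrite ltnn.
  by move=> H; have := ltn_trans H Hb; rewrite ltnn.
- by split => // _; rewrite ltnS leqW.
Qed.

Lemma index_le (x : V) X i : onth X i = Some x -> index x X <= i.
Proof.
move=> /(onth_nthP x) [Hi Hn]; rewrite leqNgt; apply/negP => H; have := before_find x H.
by rewrite /= Hn eqxx.
Qed.

Lemma index_step (a x : V) X i : onth X i = Some x ->
  (index a X < i.+1) = (index a X < i) || (a == x).
Proof.
move=> Hx; case: eqP => [->|ne]; first by rewrite orbT ltnS index_le.
rewrite orbF ltnS leq_eqVlt; case: eqP => //= Ei; exfalso; apply: ne.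
move: Hx => /(onth_nthP x) [Hi <-]; rewrite -Ei nth_index //.
by rewrite -index_mem Ei.
Qed.

Lemma onth_uniq (c : seq V) k k' a : uniq c -> onth c k = Some a ->
  onth c k' = Some a -> k = k'.
Proof.
move=> U /(onth_nthP a) [h1 h2] /(onth_nthP a) [h1' h2'].
by apply/eqP; rewrite -(nth_uniq a h1 h1' U) h2 h2'.
Qed.

Lemma uniq_cls (cls : seq (seq V)) : uniq (flatten cls) -> forall j, uniq (nth [::] cls j).
Proof.
elim: cls => [|c s IH] /= H [|j] //=; move: H; rewrite cat_uniq => /and3P[U _ U2] //.
exact: IH.
Qed.

Lemma inv_step (c : seq V) y y' x k a : uniq c ->
  (forall k, y.+1 <= k -> onth c k <> Some x) ->
  y' = (if onth c y == Some x then y.+1 else y) ->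
  onth c k = Some a -> (k < y) || (a == x) = (k < y').
Proof.
move=> U Hk -> Ha; case: (onth c y =P Some x) => [Ey|Ny].
- rewrite [RHS]ltnS [RHS]leq_eqVlt orbC; case: (eqVneq k y) => [ky|nky].
    by subst k; move: Ha; rewrite Ey => -[->]; rewrite !eqxx.
  case: eqP => // ax; exfalso; move/eqP: nky; apply; apply: (onth_uniq U Ha); by rewrite Ey ax.
- case: eqP => [ax|]; last by rewrite orbF.
  rewrite orbT; subst a; case: (ltngtP k y) => // h.
    by exfalso; exact: (Hk k h Ha).
  by subst k.
Qed.
End S.

Section S.
Variable V : eqType.

Lemma vjk_size (cls : seq (seq V)) j k a : vjk cls j k = Some a -> j < size cls.
Proof.
rewrite /vjk ltnNge; case: leqP => // h; by rewrite nth_default // onth0n.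
Qed.

Lemma prec_of_Y (cls : seq (seq V)) X (Ys : nat -> seq nat) :
  uniq (flatten cls) -> Ys 0 = nseq (size cls) 0 ->
  (forall i x, onth X i = Some x -> Econ cls x (Ys i) (Ys i.+1)) ->
  Precedence cls X.
Proof.
move=> U Y0 HE.
have Inv : forall i, i <= size X -> forall j, j < size cls -> forall k a,
    onth (nth [::] cls j) k = Some a -> (index a X < i) = (k < nth 0 (Ys i) j).
  elim=> [|i IH] Hi j Hj k a Ha.
    by rewrite Y0 nth_nseq Hj !ltn0.
  have Hx : onth X i = Some (nth a X i) by apply/(onth_nthP a).
  rewrite (index_step _ Hx) (IH (ltnW Hi) j Hj k a Ha).
  have [E1 E2] := HE _ _ Hx j Hj.
  exact: (inv_step (uniq_cls U j) E1 E2 Ha).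
move=> j k a b Ha Hb; apply/P2E => bX.
have Hj := vjk_size Hb.
have Hi : index b X < size X by rewrite index_mem.
have Hx : onth X (index b X) = Some b by apply/(onth_nthP b); rewrite nth_index.
have [E1 _] := HE _ _ Hx j Hj.
rewrite (Inv _ (ltnW Hi) j Hj k a Ha).
rewrite ltnNge; apply/negP => H; exact: (E1 k.+1 H Hb).
Qed.
End S.

Section S.
Variable V : eqType.

Lemma find_eq (T : Type) (p : pred T) (d : T) s y :
  (forall k, k < y -> ~~ p (nth d s k)) -> (y < size s -> p (nth d s y)) ->
  y <= size s -> find p s = y.
Proof.
move=> H1 H2 H3; apply/eqP; rewrite eqn_leq; apply/andP; split.
  rewrite leqNgt; apply/negP => h; have := before_find d h.
  by rewrite H2 // (leq_trans h (find_size _ _)).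
rewrite leqNgt; apply/negP => h.
have hs : find p s < size s by apply: leq_trans h H3.
move: (hs); rewrite -has_find => /(nth_find d); apply/negP; exact: H1.
Qed.

Lemma chain (cls : seq (seq V)) X j d : Precedence cls X ->
  forall k k', k' < k -> k < size (nth [::] cls j) ->
  nth d (nth [::] cls j) k \in X ->
  index (nth d (nth [::] cls j) k') X < index (nth d (nth [::] cls j) k) X.
Proof.
move=> P; set c := nth [::] cls j.
have step : forall k, k.+1 < size c -> nth d c k.+1 \in X ->
    index (nth d c k) X < index (nth d c k.+1) X.
  move=> k hk hX; apply: ((P2E _ _ X).1 _ hX); apply: (P j k).
    by apply/(onth_nthP d); split => //; apply: ltnW.
  by apply/(onth_nthP d).
elim=> [|k IH] k' // hk' hk hX.
have s1 := step k hk hX.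
have kX : nth d c k \in X.
  by rewrite -index_mem (ltn_trans s1) // index_mem.
move: hk'; rewrite ltnS leq_eqVlt => /orP [/eqP ->|h] //.
exact: ltn_trans (IH k' h (ltnW hk) kX) s1.
Qed.

Lemma Y_of_prec (cls : seq (seq V)) X : uniq (flatten cls) -> Precedence cls X ->
  exists Ys : nat -> seq nat,
       [/\ (forall i, i <= size X -> Yvalid cls (Ys i)),
           Ys 0 = nseq (size cls) 0 &
           (forall i x, onth X i = Some x -> Econ cls x (Ys i) (Ys i.+1))].
Proof.
move=> U P.
exists (fun i => map (fun c => find (fun v => i <= index v X) c) cls); split.
- move=> i _; split; first by rewrite size_map.
  by move=> j hj; rewrite (nth_map [::]) // find_size.
- by elim: cls {U P} => //= c s ->; case: c.
move=> i x Hx j hj; rewrite !(nth_map [::]) //.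
set c := nth [::] cls j.
set y := find _ c.
have [hiX hxi] := (onth_nthP x _ _ _).1 Hx.
have hiX' : index x X <= i := index_le Hx.
have xX : x \in X by rewrite -index_mem (leq_ltn_trans hiX' hiX).
have F1 : forall k, k < y -> index (nth x c k) X < i.
  by move=> k hk; have := before_find x hk; rewrite /= ltnNge => ->.
have F2 : y < size c -> i <= index (nth x c y) X.
  by move=> hy; move: (hy); rewrite -has_find => /(nth_find x).
split.
  move=> k hk /(onth_nthP x) [hkc hkx].
  have := @chain cls X j x P k y hk hkc; rewrite /= -/c hkx => /(_ xX) h.
  have := F2 (ltn_trans hk hkc); rewrite leqNgt (leq_trans h hiX') //.
case: (onth c y =P Some x) => [Ey|Ny].
  have [hyc hyx] := (onth_nthP x _ _ _).1 Ey.
  have ix : index x X = i.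
    by apply/eqP; rewrite eqn_leq hiX' -hyx F2.
  apply: (@find_eq _ _ x).
  - move=> k; rewrite ltnS leq_eqVlt => /orP [/eqP ->|hk].
      by rewrite /= hyx ix ltnn.
    by rewrite /= -ltnNge ltnS ltnW // F1.
  - move=> hy1 /=; rewrite leqNgt; apply/negP => h.
    have inX : nth x c y.+1 \in X by rewrite -index_mem (leq_trans h hiX).
    have := @chain cls X j x P y.+1 y (ltnSn y) hy1 inX; rewrite -/c hyx ix.
    by rewrite ltnNge -ltnS h.
  - exact: hyc.
apply: (@find_eq _ _ x).
- by move=> k hk /=; rewrite -ltnNge ltnS ltnW // F1.
- move=> hy /=; have := F2 hy; rewrite leq_eqVlt => /orP [/eqP hi|] //.
  exfalso; apply: Ny; apply/(onth_nthP x); split => //.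
  have inX : nth x c y \in X by rewrite -index_mem -hi.
  by apply: (etrans _ hxi); rewrite hi nth_index.
- by rewrite /y find_size.
Qed.
End S.

Section S.
Variable V : eqType.
Variables (cls : seq (seq V)) (n : nat) (DX : nat -> seq V) (DY : nat -> seq (seq nat)).
Hypothesis HG : forall i, i < n -> GAC_E cls (DX i) (DY i) (DY i.+1).

Lemma back (d : V) z : DY 0 = [:: z] -> forall m, m <= n -> forall y, y \in DY m ->
  exists (f : nat -> V) (Ys : nat -> seq nat),
    [/\ Ys m = y, Ys 0 = z, (forall k, k <= m -> Ys k \in DY k) &
        (forall k, k < m -> f k \in DX k /\ Econ cls (f k) (Ys k) (Ys k.+1))].
Proof.
move=> HY0; elim=> [|m IH] hm y hy.
  move: hy; rewrite HY0 inE => /eqP ->.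
  exists (fun _ => d), (fun _ => z); split => // k; first by rewrite leqn0 => /eqP ->; rewrite HY0 mem_head.
have [_ [_ H3]] := HG hm.
have [x [y0 [hx hy0 E]]] := H3 y hy.
have [f [Ys [e1 e2 e3 e4]]] := IH (ltnW hm) y0 hy0.
exists (fun k => if k == m then x else f k), (fun k => if k == m.+1 then y else Ys k).
split => //.
- by rewrite eqxx.
- move=> k; case: eqP => [->|nk] // hk; apply: e3.
  by move: hk; rewrite leq_eqVlt => /orP [/eqP|] //.
- move=> k hk; case: (eqVneq k m) => [->|nk].
    by rewrite ?eqxx (ltn_eqF (ltnSn m)) e1.
  have hk' : k < m by rewrite ltn_neqAle nk -ltnS.
  rewrite (ltn_eqF (ltn_trans hk' (ltnSn m))) eqSS (ltn_eqF hk').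
  exact: e4.
Qed.

Lemma fwd (d0 : V) : forall d p y, n - p = d -> p <= n -> y \in DY p ->
  exists (g : nat -> V) (Zs : nat -> seq nat),
    [/\ Zs p = y, (forall k, p <= k <= n -> Zs k \in DY k) &
        (forall k, p <= k < n -> g k \in DX k /\ Econ cls (g k) (Zs k) (Zs k.+1))].
Proof.
elim=> [|d IH] p y hd hp hy.
  have ep : p = n by apply/eqP; rewrite eqn_leq hp -subn_eq0 hd.
  subst p; exists (fun _ => d0), (fun _ => y); split => //.
    by move=> k /andP [h1 h2]; have -> : k = n by apply/eqP; rewrite eqn_leq h1 h2.
  by move=> k /andP [h1 h2]; exfalso; move: (leq_trans h2 h1); rewrite ltnn.
have hpn : p < n by rewrite -subn_gt0 hd.
have [_ [H2 _]] := HG hpn.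
have [x [y1 [hx hy1 E]]] := H2 y hy.
have hd' : n - p.+1 = d by rewrite subnS hd.
have [g [Zs [e1 e2 e3]]] := IH p.+1 y1 hd' hpn hy1.
exists (fun k => if k == p then x else g k), (fun k => if k == p then y else Zs k).
split.
- by rewrite eqxx.
- move=> k /andP [h1 h2]; case: (eqVneq k p) => [->|nk] //.
  by apply: e2; rewrite h2 andbT ltn_neqAle eq_sym nk.
- move=> k /andP [h1 h2]; case: (eqVneq k p) => [->|nk].
    by rewrite ?eqxx (gtn_eqF (ltnSn p)) e1.
  have h1' : p < k by rewrite ltn_neqAle eq_sym nk.
  rewrite (gtn_eqF (ltn_trans h1' (ltnSn k))).
  by apply: e3; rewrite h1' h2.
Qed.
End S.

Theorem mainTheorem9 (V : eqType) (cls : seq (seq V)) :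
  uniq (flatten cls) ->
  all (fun c => 0 < size c) cls ->
  (* (a) *)
  (forall X : seq V,
     Precedence cls X <->
     exists Ys : nat -> seq nat,
       [/\ (forall i, i <= size X -> Yvalid cls (Ys i)),
           Ys 0 = nseq (size cls) 0 &
           (forall i x, onth X i = Some x -> Econ cls x (Ys i) (Ys i.+1))])
  /\
  (* (b) *)
  (forall (n : nat) (DX : nat -> seq V) (DY : nat -> seq (seq nat)),
     (forall i, i < n -> DX i != [::]) ->
     (forall i, i <= n -> DY i != [::]) ->
     (forall i y, i <= n -> y \in DY i -> Yvalid cls y) ->
     DY 0 = [:: nseq (size cls) 0] ->
     (forall i, i < n -> GAC_E cls (DX i) (DY i) (DY i.+1)) ->
     GAC_Prec cls n DX).
Proof.
move=> U _; split.
  move=> X; split; first exact: Y_of_prec.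
  by move=> [Ys [_ h0 hE]]; exact: (prec_of_Y U h0 hE).
move=> n DX DY _ _ _ HY0 HG i a hi ha.
have [y [y' [hy hy' E]]] := (HG i hi).1 a ha.
have [f [Ys [b1 b2 b3 b4]]] := back HG a HY0 (ltnW hi) hy.
have [g [Zs [f1 f2 f3]]] := fwd HG a (erefl (n - i.+1)) hi hy'.
pose F k := if k < i then f k else if k == i then a else g k.
pose Y k := if k <= i then Ys k else Zs k.
have HF : forall k, k < n -> F k \in DX k /\ Econ cls (F k) (Y k) (Y k.+1).
  move=> k hk; rewrite /F /Y.
  case: (ltngtP k i) => h.
    by apply: b4.
    by apply: f3; rewrite h hk.
  by subst k; rewrite b1 f1.
exists (mkseq F n); split.
- exact: size_mkseq.
- move=> k x /(onth_nthP a) [hk <-]; rewrite size_mkseq in hk.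
  by rewrite nth_mkseq //; have [] := HF k hk.
- by apply/(onth_nthP a); rewrite size_mkseq nth_mkseq // /F ltnn eqxx.
apply: (prec_of_Y U (Ys := Y)); first by rewrite /Y leq0n b2.
move=> k x /(onth_nthP a) [hk <-]; rewrite size_mkseq in hk.
by rewrite nth_mkseq //; have [] := HF k hk.
Qed.
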